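(* There exists $\delta_0>0$ such that for every $0<\delta<\delta_0$ the following holds. If $\gamma:[0,n]\to\mathbb{H}^3$ is a $(1+\delta,\delta)$-quasigeodesic and $\bar\gamma$ is the geodesic segment with endpoints $\gamma(0)$ and $\gamma(n)$, then $\gamma([0,n])$ is contained in the $\eta$-neighborhood of $\bar\gamma$, where $\eta=5\delta^{1/5}$.
   Context: A $(1+\delta,\delta)$-quasigeodesic is a continuous map $\gamma:[0,n]\to\mathbb{H}^3$ with $\frac{|s-t|}{1+\delta}-\delta\le d_{\mathbb{H}^3}(\gamma(s),\gamma(t))\le(1+\delta)|s-t|+\delta$ for all $s,t\in[0,n]$. *)

(* Defs.v *)
(* hyperbolic 3-space via the hyperboloid model in R^{3,1}. *)
From Stdlib Require Import Reals.
Open Scope R_scope.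

Definition R4 : Type := (R * R * R * R)%type.

Definition mink (x y : R4) : R :=
  match x, y with
  | (x0, x1, x2, x3), (y0, y1, y2, y3) =>
      - (x0 * y0) + x1 * y1 + x2 * y2 + x3 * y3
  end.

Definition inH3 (x : R4) : Prop :=
  mink x x = -1 /\ 0 < fst (fst (fst x)).

Definition arcosh (t : R) : R := ln (t + sqrt (t * t - 1)).

Definition dH (x y : R4) : R := arcosh (- mink x y).

Definition continuous_on_H3 (gamma : R -> R4) (a b : R) : Prop :=
  forall s, a <= s <= b -> forall eps, 0 < eps ->
    exists del, 0 < del /\
      forall t, a <= t <= b -> Rabs (t - s) < del -> dH (gamma s) (gamma t) < eps.

Definition quasigeodesic (delta n : R) (gamma : R -> R4) : Prop :=
  (forall t, 0 <= t <= n -> inH3 (gamma t)) /\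
  continuous_on_H3 gamma 0 n /\
  forall s t, 0 <= s <= n -> 0 <= t <= n ->
    Rabs (s - t) / (1 + delta) - delta <= dH (gamma s) (gamma t) /\
    dH (gamma s) (gamma t) <= (1 + delta) * Rabs (s - t) + delta.

Definition geodesic_segment (p q : R4) (c : R -> R4) : Prop :=
  (forall t, 0 <= t <= dH p q -> inH3 (c t)) /\
  c 0 = p /\ c (dH p q) = q /\
  forall s t, 0 <= s <= dH p q -> 0 <= t <= dH p q ->
    dH (c s) (c t) = Rabs (s - t).

(* Main.v *)
Require Import Defs.
From Stdlib Require Import Reals Lra Lia Psatz.
Open Scope R_scope.

Definition lin2 (l : R) (a : R4) (m : R) (b : R4) : R4 :=
  match a, b with
  | (a0, a1, a2, a3), (b0, b1, b2, b3) =>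
      (l*a0 + m*b0, l*a1 + m*b1, l*a2 + m*b2, l*a3 + m*b3)
  end.

Ltac dR4 x := let x0 := fresh x "0" in let x1 := fresh x "1" in
  let x2 := fresh x "2" in let x3 := fresh x "3" in
  destruct x as [[[x0 x1] x2] x3].

Lemma mink_sym x y : mink x y = mink y x.
Proof. dR4 x; dR4 y; simpl; ring. Qed.

Lemma mink_lin2_l l a m b w : mink (lin2 l a m b) w = l * mink a w + m * mink b w.
Proof. dR4 a; dR4 b; dR4 w; simpl; ring. Qed.

Lemma mink_lin2_r l a m b w : mink w (lin2 l a m b) = l * mink w a + m * mink w b.
Proof. dR4 a; dR4 b; dR4 w; simpl; ring. Qed.

Lemma rev_CS x y : inH3 x -> inH3 y -> 1 <= - mink x y.
Proof.
  dR4 x; dR4 y; unfold inH3; simpl; intros [Hx Px] [Hy Py].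
  set (S := x1*y1 + x2*y2 + x3*y3).
  assert (HS2 : S*S <= (x1*x1+x2*x2+x3*x3)*(y1*y1+y2*y2+y3*y3)).
  { unfold S. pose proof (Rle_0_sqr (x1*y2-x2*y1)); pose proof (Rle_0_sqr (x1*y3-x3*y1));
    pose proof (Rle_0_sqr (x2*y3-x3*y2)); unfold Rsqr in *; nra. }
  assert (HS1 : 2*S <= (x1*x1+x2*x2+x3*x3)+(y1*y1+y2*y2+y3*y3)).
  { unfold S. pose proof (Rle_0_sqr (x1-y1)); pose proof (Rle_0_sqr (x2-y2));
    pose proof (Rle_0_sqr (x3-y3)); unfold Rsqr in *; nra. }
  assert (Hx0 : x0*x0 = 1 + (x1*x1+x2*x2+x3*x3)) by lra.
  assert (Hy0 : y0*y0 = 1 + (y1*y1+y2*y2+y3*y3)) by lra.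
  assert (H : (1+S)*(1+S) <= (x0*y0)*(x0*y0)).
  { replace ((x0*y0)*(x0*y0)) with ((x0*x0)*(y0*y0)) by ring.
    rewrite Hx0, Hy0. nra. }
  assert (0 < x0*y0) by nra.
  assert (1 + S <= x0*y0) by nra.
  unfold S in *. lra.
Qed.

Lemma orth_nonneg x v : mink x x = -1 -> mink v x = 0 -> 0 <= mink v v.
Proof.
  dR4 x; dR4 v; simpl; intros Hx Hv.
  set (S := v1*x1 + v2*x2 + v3*x3).
  assert (HS2 : S*S <= (v1*v1+v2*v2+v3*v3)*(x1*x1+x2*x2+x3*x3)).
  { unfold S. pose proof (Rle_0_sqr (v1*x2-v2*x1)); pose proof (Rle_0_sqr (v1*x3-v3*x1));
    pose proof (Rle_0_sqr (v2*x3-v3*x2)); unfold Rsqr in *; nra. }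
  assert (E : v0*x0 = S) by (unfold S; lra).
  assert (Hx0 : x0*x0 = 1 + (x1*x1+x2*x2+x3*x3)) by lra.
  assert (H : (x0*x0)*(v0*v0 - (v1*v1+v2*v2+v3*v3)) <= - (v1*v1+v2*v2+v3*v3)).
  { replace ((x0*x0)*(v0*v0 - (v1*v1+v2*v2+v3*v3))) with
      ((v0*x0)*(v0*x0) - (x0*x0)*(v1*v1+v2*v2+v3*v3)) by ring.
    rewrite E, Hx0. nra. }
  assert (v0*v0 - (v1*v1+v2*v2+v3*v3) <= 0) by nra.
  lra.
Qed.

Lemma orth_null x v : mink x x = -1 -> mink v x = 0 -> mink v v = 0 ->
  v = (0,0,0,0).
Proof.
  dR4 x; dR4 v; simpl; intros Hx Hv Hvv.
  set (S := v1*x1 + v2*x2 + v3*x3).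
  assert (HS2 : S*S <= (v1*v1+v2*v2+v3*v3)*(x1*x1+x2*x2+x3*x3)).
  { unfold S. pose proof (Rle_0_sqr (v1*x2-v2*x1)); pose proof (Rle_0_sqr (v1*x3-v3*x1));
    pose proof (Rle_0_sqr (v2*x3-v3*x2)); unfold Rsqr in *; nra. }
  assert (E : v0*x0 = S) by (unfold S; lra).
  assert (Hx0 : x0*x0 = 1 + (x1*x1+x2*x2+x3*x3)) by lra.
  assert (H : (x0*x0)*(v0*v0 - (v1*v1+v2*v2+v3*v3)) <= - (v1*v1+v2*v2+v3*v3)).
  { replace ((x0*x0)*(v0*v0 - (v1*v1+v2*v2+v3*v3))) with
      ((v0*x0)*(v0*x0) - (x0*x0)*(v1*v1+v2*v2+v3*v3)) by ring.
    rewrite E, Hx0. nra. }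
  assert (E2 : v0*v0 - (v1*v1+v2*v2+v3*v3) = 0) by lra.
  rewrite E2 in H.
  assert (v1 = 0) by nra. assert (v2 = 0) by nra. assert (v3 = 0) by nra.
  subst. assert (v0 = 0) by nra. subst. reflexivity.
Qed.

Lemma quad_disc A B C : 0 <= C -> (forall t, 0 <= A + 2*B*t + C*t*t) -> B*B <= A*C.
Proof.
  intros HC0 H.
  destruct (Rlt_dec 0 C) as [HC|HC].
  - specialize (H (-B/C)).
    replace (A + 2*B*(-B/C) + C*(-B/C)*(-B/C)) with (A - B*B/C) in H by (field; lra).
    assert (0 <= A*C - B*B).
    { replace (A*C - B*B) with ((A - B*B/C)*C) by (field; lra). nra. }
    lra.
  - assert (HC1: C = 0) by lra. subst C.
    destruct (Req_dec B 0) as [HB|HB].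
    + subst. lra.
    + specialize (H (-(A+1)/(2*B))).
      replace (A + 2*B*(-(A+1)/(2*B)) + 0*(-(A+1)/(2*B))*(-(A+1)/(2*B))) with (-1) in H
        by (field; lra). lra.
Qed.

Lemma mink_add_expand u v t : mink (lin2 1 u t v) (lin2 1 u t v) =
  mink u u + 2*mink u v*t + mink v v*t*t.
Proof. dR4 u; dR4 v; simpl; ring. Qed.

Lemma CS_orth x u v : mink x x = -1 -> mink u x = 0 -> mink v x = 0 ->
  mink u v * mink u v <= mink u u * mink v v.
Proof.
  intros Hx Hu Hv. apply quad_disc.
  - apply (orth_nonneg x); auto.
  - intros t. rewrite <- mink_add_expand. apply (orth_nonneg x); auto.
    rewrite mink_lin2_l, Hu, Hv. ring.
Qed.

Lemma err_lemma x y w : mink x x = -1 -> mink y y = -1 -> mink w w = 1 ->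
  let K := - mink x y in
  (K * mink x w - mink y w) * (K * mink x w - mink y w) <=
  (K*K - 1) * (1 + mink x w * mink x w).
Proof.
  intros Hx Hy Hw K.
  set (u := lin2 K x (-1) y). set (v := lin2 1 w (mink w x) x).
  assert (Hux : mink u x = 0).
  { unfold u. rewrite mink_lin2_l, Hx, (mink_sym y x). unfold K. ring. }
  assert (Hvx : mink v x = 0).
  { unfold v. rewrite mink_lin2_l, Hx. ring. }
  pose proof (CS_orth x u v Hx Hux Hvx) as H.
  assert (E1 : mink u v = K * mink x w - mink y w).
  { unfold v. rewrite mink_lin2_r, Hux. unfold u.
    rewrite mink_lin2_l. ring. }
  assert (E2 : mink u u = K*K - 1).
  { unfold u at 1. rewrite mink_lin2_l. unfold u. rewrite !mink_lin2_r, Hx, Hy.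
    rewrite (mink_sym y x). unfold K. ring. }
  assert (E3 : mink v v = 1 + mink x w * mink x w).
  { unfold v at 1. rewrite mink_lin2_l. unfold v. rewrite !mink_lin2_r, Hx, Hw.
    rewrite (mink_sym w x). ring. }
  rewrite E1, E2, E3 in H. exact H.
Qed.
Lemma ln_le x y : 0 < x -> x <= y -> ln x <= ln y.
Proof. intros H [H'|H']. - left. apply ln_increasing; auto. - subst; lra. Qed.

Lemma exp_le a b : a <= b -> exp a <= exp b.
Proof. intros [H|H]. - left. apply exp_increasing; auto. - subst; lra. Qed.

Lemma exp_ge1 t : 0 <= t -> 1 <= exp t.
Proof. intros. rewrite <- exp_0. apply exp_le; auto. Qed.

Lemma Rdiv_le_0_compat a b : 0 <= a -> 0 < b -> 0 <= a / b.
Proof. intros. unfold Rdiv. apply Rmult_le_pos; auto. left; apply Rinv_0_lt_compat; auto. Qed.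

Definition ch (t : R) := (exp t + exp (-t)) / 2.
Definition sh (t : R) := (exp t - exp (-t)) / 2.

Lemma exp_neg t : exp (-t) = / exp t.
Proof. apply exp_Ropp. Qed.

Lemma sqrt_sq_m1 K : 1 <= K -> sqrt (K*K-1) * sqrt (K*K-1) = K*K - 1.
Proof. intros. apply sqrt_sqrt. nra. Qed.

Lemma exp_arcosh K : 1 <= K -> exp (arcosh K) = K + sqrt (K*K-1).
Proof.
  intros H. unfold arcosh. rewrite exp_ln; auto.
  pose proof (sqrt_pos (K*K-1)). lra.
Qed.

Lemma ch_arcosh K : 1 <= K -> ch (arcosh K) = K.
Proof.
  intros H. unfold ch. rewrite exp_neg, exp_arcosh by auto.
  pose proof (sqrt_pos (K*K-1)). pose proof (sqrt_sq_m1 K H).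
  set (s := sqrt (K*K-1)) in *.
  assert (E : / (K + s) = K - s).
  { apply Rmult_eq_reg_l with (K+s); [|lra]. rewrite Rinv_r by lra. nra. }
  rewrite E. field.
Qed.

Lemma arcosh_ge0 K : 1 <= K -> 0 <= arcosh K.
Proof.
  intros H. unfold arcosh. rewrite <- ln_1. apply ln_le; [lra|].
  pose proof (sqrt_pos (K*K-1)). lra.
Qed.

Lemma arcosh_mono K K' : 1 <= K -> K <= K' -> arcosh K <= arcosh K'.
Proof.
  intros H H'. unfold arcosh. apply ln_le.
  - pose proof (sqrt_pos (K*K-1)). lra.
  - apply Rplus_le_compat; auto. apply sqrt_le_1_alt. nra.
Qed.

Lemma arcosh_ch t : 0 <= t -> arcosh (ch t) = t.
Proof.
  intros H. unfold arcosh, ch. rewrite exp_neg.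
  pose proof (exp_ge1 t H). set (X := exp t) in *.
  assert (E: sqrt ((X + /X) / 2 * ((X + /X) / 2) - 1) = (X - /X)/2).
  { replace ((X + /X) / 2 * ((X + /X) / 2) - 1)
      with (((X - /X)/2)*((X - /X)/2)) by (field; lra).
    apply sqrt_square.
    assert (/X <= 1). { rewrite <- Rinv_1. apply Rinv_le_contravar; lra. }
    lra. }
  rewrite E. replace ((X + /X) / 2 + (X - /X) / 2) with X by (field; lra).
  apply ln_exp.
Qed.

Lemma ch_le_exp d : 0 <= d -> ch d <= exp d.
Proof.
  intros H. unfold ch. assert (exp (-d) <= exp d) by (apply exp_le; lra). lra.
Qed.

Lemma ch_ge1 d : 1 <= ch d.
Proof.
  unfold ch. rewrite exp_neg. pose proof (exp_pos d). set (X := exp d) in *.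
  assert (0 <= (X - 1)*(X-1)/X). { apply Rdiv_le_0_compat; [pose proof (Rle_0_sqr (X-1)); unfold Rsqr in *; lra|lra]. }
  replace ((X + /X)/2) with (1 + (X-1)*(X-1)/X/2) by (field; lra). lra.
Qed.

Lemma ch_mono a b : 0 <= a -> a <= b -> ch a <= ch b.
Proof.
  intros Ha Hab. unfold ch. rewrite !exp_neg.
  pose proof (exp_ge1 a Ha). pose proof (exp_le a b Hab).
  set (X := exp a) in *. set (Y := exp b) in *.
  assert (Y + /Y - (X + /X) = (Y - X)*(X*Y - 1)/(X*Y)) by (field; lra).
  assert (0 <= (Y - X)*(X*Y - 1)/(X*Y)). { apply Rdiv_le_0_compat; [apply Rmult_le_pos; nra|nra]. }
  lra.
Qed.

Lemma sh_pos t : 0 < t -> 0 < sh t.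
Proof.
  intros H. unfold sh. assert (exp (-t) < exp t) by (apply exp_increasing; lra). lra.
Qed.

Lemma sh_nonneg t : 0 <= t -> 0 <= sh t.
Proof.
  intros H. unfold sh. assert (exp (-t) <= exp t) by (apply exp_le; lra). lra.
Qed.

Lemma dH_sym x y : dH x y = dH y x.
Proof. unfold dH. rewrite (mink_sym x y). reflexivity. Qed.

Lemma ch_dH x y : inH3 x -> inH3 y -> ch (dH x y) = - mink x y.
Proof. intros. unfold dH. apply ch_arcosh. apply rev_CS; auto. Qed.

Lemma dH_ge0 x y : inH3 x -> inH3 y -> 0 <= dH x y.
Proof. intros. unfold dH. apply arcosh_ge0. apply rev_CS; auto. Qed.

Lemma exp_minus u v : exp (u - v) = exp u / exp v.
Proof. unfold Rminus. rewrite exp_plus, exp_neg. reflexivity. Qed.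

Lemma mink_lin2_sq l a m b : mink (lin2 l a m b) (lin2 l a m b) =
  l*l*mink a a + 2*l*m*mink a b + m*m*mink b b.
Proof. dR4 a; dR4 b; simpl; ring. Qed.

Lemma sh_ratio u g : 0 <= u -> 0 <= g -> sh u <= exp (-g) * sh (u+g).
Proof.
  intros Hu Hg. unfold sh. rewrite !exp_neg, exp_plus.
  pose proof (exp_ge1 u Hu). pose proof (exp_ge1 g Hg).
  set (U := exp u) in *. set (G := exp g) in *.
  assert (E: /G * ((U*G - /(U*G))/2) - (U - /U)/2 = (G*G - 1)/(2*U*G*G)) by (field; lra).
  assert (0 <= (G*G - 1)/(2*U*G*G)). { apply Rdiv_le_0_compat; nra. }
  lra.
Qed.

Lemma geo_identity al D : sh (D-al) * sh (D-al) + sh al * sh al +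
  2 * sh (D-al) * sh al * ch D = sh D * sh D.
Proof.
  unfold sh, ch. rewrite !exp_neg, exp_minus.
  pose proof (exp_pos al). pose proof (exp_pos D).
  set (X := exp al) in *. set (Y := exp D) in *. field; lra.
Qed.

Lemma excess_ineq al c e : 0 <= al -> 0 <= c -> 0 <= e ->
  sh c * ch al + sh al * ch (c+e) <= exp e * sh (al + c).
Proof.
  intros Ha Hc He. unfold sh, ch. rewrite !exp_neg, !exp_plus.
  pose proof (exp_ge1 al Ha). pose proof (exp_ge1 c Hc). pose proof (exp_ge1 e He).
  set (X := exp al) in *. set (Y := exp c) in *. set (Z := exp e) in *.
  assert (E : Z * ((X*Y - /(X*Y))/2) - ((Y - /Y)/2 * ((X + /X)/2) + (X - /X)/2 * ((Y*Z + /(Y*Z))/2))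
     = (Z-1)*(X*X*Y*Y*Z + Y*Y*Z + X*X - (2*Z+1)) / (4*X*Y*Z)) by (field; lra).
  assert (0 <= (Z-1)*(X*X*Y*Y*Z + Y*Y*Z + X*X - (2*Z+1)) / (4*X*Y*Z)).
  { apply Rdiv_le_0_compat; [|assert (0 < X*Y) by nra; nra]. apply Rmult_le_pos; [lra|].
    assert (1 <= X*X) by nra. assert (1 <= Y*Y) by nra.
    assert (Z <= X*X*Y*Y*Z). { assert (1 <= X*X*(Y*Y)) by nra. nra. }
    nra. }
  lra.
Qed.

Lemma excess a x b e : inH3 a -> inH3 x -> inH3 b -> 0 <= e ->
  dH a x + dH x b <= dH a b + e ->
  exists l m, 0 <= l /\ 0 <= m /\ l <= exp (- dH a x) /\ m <= exp (e - dH x b) /\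
    mink (lin2 l a m b) (lin2 l a m b) = -1 /\ - mink x (lin2 l a m b) <= exp e.
Proof.
  intros Ha Hx Hb He Hex.
  pose proof (dH_ge0 a x Ha Hx) as Hal. pose proof (dH_ge0 x b Hx Hb) as Hbe.
  pose proof (dH_ge0 a b Ha Hb) as HD.
  pose proof (ch_dH a x Ha Hx) as Cal. pose proof (ch_dH x b Hx Hb) as Cbe.
  pose proof (ch_dH a b Ha Hb) as CD.
  assert (Haa : mink a a = -1) by apply Ha.
  assert (Hbb : mink b b = -1) by apply Hb.
  set (al := dH a x) in *. set (be := dH x b) in *. set (D := dH a b) in *.
  destruct (Rlt_dec al D) as [Hlt|Hge].
  - assert (HshD : 0 < sh D) by (apply sh_pos; lra).
    exists (sh (D-al) / sh D), (sh al / sh D).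
    pose proof (sh_nonneg (D-al) ltac:(lra)). pose proof (sh_nonneg al Hal).
    repeat split.
    + apply Rdiv_le_0_compat; auto.
    + apply Rdiv_le_0_compat; auto.
    + apply (Rmult_le_reg_r (sh D)); auto. unfold Rdiv; rewrite Rmult_assoc, Rinv_l by lra.
      rewrite Rmult_1_r. pose proof (sh_ratio (D-al) al ltac:(lra) Hal).
      replace (D - al + al) with D in H1 by ring. lra.
    + apply Rle_trans with (exp (-(D-al))).
      * apply (Rmult_le_reg_r (sh D)); auto. unfold Rdiv; rewrite Rmult_assoc, Rinv_l by lra.
        rewrite Rmult_1_r. pose proof (sh_ratio al (D-al) Hal ltac:(lra)).
        replace (al + (D - al)) with D in H1 by ring. lra.
      * apply exp_le. lra.
    + rewrite mink_lin2_sq, Haa, Hbb.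
      assert (Eab : mink a b = - ch D) by lra. rewrite Eab.
      pose proof (geo_identity al D).
      apply (Rmult_eq_reg_r (sh D * sh D)); [|nra].
      field_simplify; [|lra]. nra.
    + rewrite mink_lin2_r. rewrite (mink_sym x a).
      assert (E1 : - (sh (D - al) / sh D * mink a x + sh al / sh D * mink x b)
                 = (sh (D-al) * ch al + sh al * ch be) / sh D).
      { rewrite Cal, Cbe. field. lra. }
      rewrite E1. apply (Rmult_le_reg_r (sh D)); auto.
      unfold Rdiv; rewrite Rmult_assoc, Rinv_l by lra. rewrite Rmult_1_r.
      pose proof (excess_ineq al (D-al) e Hal ltac:(lra) He).
      replace (al + (D - al)) with D in H1 by ring.
      assert (ch be <= ch (D - al + e)) by (apply ch_mono; lra).
      nra.
  - exists 0, 1. repeat split; try lra.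
    + left; apply exp_pos.
    + rewrite <- exp_0. apply exp_le. lra.
    + rewrite mink_lin2_sq, Hbb. ring.
    + rewrite mink_lin2_r.
      replace (- (0 * mink x a + 1 * mink x b)) with (- mink x b) by ring.
      rewrite <- Cbe. apply Rle_trans with (exp be).
      * apply ch_le_exp; auto.
      * apply exp_le. lra.
Qed.

Lemma lin2_H3 l a m b : inH3 a -> inH3 b -> 0 <= l -> 0 <= m ->
  mink (lin2 l a m b) (lin2 l a m b) = -1 -> inH3 (lin2 l a m b).
Proof.
  intros Ha Hb Hl Hm Hy. split; auto.
  destruct Ha as [_ Ha]. destruct Hb as [_ Hb].
  revert Hy Ha Hb. dR4 a; dR4 b; simpl. intros Hy Ha Hb.
  destruct (Rle_lt_or_eq_dec 0 l Hl) as [Hl'|Hl']; [nra|].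
  destruct (Rle_lt_or_eq_dec 0 m Hm) as [Hm'|Hm']; [nra|].
  subst. exfalso. nra.
Qed.

Lemma Rabs_ord a b : a <= b -> Rabs (a - b) = b - a.
Proof. intros. rewrite Rabs_left1 by lra. ring. Qed.
Lemma Rabs_ord' a b : a <= b -> Rabs (b - a) = b - a.
Proof. intros. rewrite Rabs_right by lra. ring. Qed.

Lemma sq_le a b : 0 <= b -> a*a <= b*b -> a <= b.
Proof. intros. nra. Qed.

Lemma exp_neg_small x : 0 <= x -> exp (-x) <= 1/(1+x).
Proof.
  intros H. rewrite exp_neg. pose proof (exp_ineq1_le x).
  unfold Rdiv. rewrite Rmult_1_l. apply Rinv_le_contravar; lra.
Qed.

Lemma exp_small_up x : 0 <= x -> x < 1 -> exp x <= 1/(1-x).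
Proof.
  intros H H1. replace x with (- (-x)) at 1 by ring. rewrite exp_neg.
  pose proof (exp_ineq1_le (-x)).
  unfold Rdiv. rewrite Rmult_1_l. apply Rinv_le_contravar; lra.
Qed.

Lemma div_ge a d : 0 <= a -> 0 < d -> a/(1+d) >= a - a*d.
Proof.
  intros Ha Hd. assert (E : a/(1+d) = a - a*d + a*d*d/(1+d)) by (field; lra).
  assert (0 <= a*d*d/(1+d)) by (apply Rdiv_le_0_compat; [apply Rmult_le_pos; nra|lra]).
  lra.
Qed.

Lemma main_max (delta n : R) gamma w :
  0 < delta <= 1/4096 -> 0 <= n -> quasigeodesic delta n gamma ->
  mink w w = 1 -> mink (gamma 0) w <= 0 -> mink (gamma n) w <= 0 ->
  forall s, 0 <= s <= n -> mink (gamma s) w <= 32 * sqrt delta.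
Proof.
  intros Hd Hn [HH3 [_ Hq]] Hw H0 Hn0.
  set (sd := sqrt delta).
  assert (Hsd : sd * sd = delta) by (apply sqrt_sqrt; lra).
  assert (Hsd0 : 0 <= sd) by apply sqrt_pos.
  assert (Hsd1 : sd <= 1/64) by nra.
  set (E := fun m => exists s, 0 <= s <= n /\ m = mink (gamma s) w).
  assert (HEb : bound E).
  { set (P := Rabs (mink (gamma 0) w)).
    set (U := exp ((1+delta)*n + delta)).
    exists (2*U*(1+P)). intros m [s [Hs ->]].
    assert (H0H := HH3 0 ltac:(lra)). assert (HsH := HH3 s Hs).
    pose proof (err_lemma (gamma 0) (gamma s) w (proj1 H0H) (proj1 HsH) Hw) as Er.
    simpl in Er.
    set (K := - mink (gamma 0) (gamma s)) in *.
    assert (HK1 : 1 <= K) by (apply rev_CS; auto).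
    assert (HKU : K <= U).
    { unfold K. rewrite <- ch_dH by auto. apply Rle_trans with (exp (dH (gamma 0) (gamma s))).
      - apply ch_le_exp, dH_ge0; auto.
      - apply exp_le. destruct (Hq 0 s ltac:(lra) Hs) as [_ Hup].
        rewrite Rabs_ord in Hup by lra. nra. }
    assert (HP : 0 <= P) by apply Rabs_pos.
    assert (HPa : mink (gamma 0) w * mink (gamma 0) w = P * P).
    { unfold P. rewrite <- Rabs_mult. rewrite Rabs_right; [reflexivity|nra]. }
    assert (HPa2 : - P <= mink (gamma 0) w <= P).
    { unfold P. pose proof (Rle_abs (mink (gamma 0) w)).
      pose proof (Rle_abs (- mink (gamma 0) w)). rewrite Rabs_Ropp in *. lra. }
    set (pw := mink (gamma 0) w) in *. set (sw := mink (gamma s) w).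
    assert (Hb2 : (K*pw - sw)*(K*pw - sw) <= (K*(1+P))*(K*(1+P))).
    { apply Rle_trans with ((K*K-1)*(1+pw*pw)); [exact Er|]. rewrite HPa. nra. }
    assert (sw - K*pw <= K*(1+P)).
    { apply sq_le; [nra|]. nra. }
    nra. }
  assert (HEn : exists m, E m) by (exists (mink (gamma 0) w); exists 0; split; [lra|reflexivity]).
  destruct (completeness E HEb HEn) as [M [HMub HMl]].
  set (Mp := Rmax M 0).
  assert (HMp0 : 0 <= Mp) by apply Rmax_r.
  assert (HMMp : M <= Mp) by apply Rmax_l.
  assert (HinE : forall s, 0 <= s <= n -> mink (gamma s) w <= Mp).
  { intros s Hs. apply Rle_trans with M; auto. apply HMub. exists s; split; auto. }
  assert (Hclaim : forall s, 0 <= s <= n -> mink (gamma s) w <= Mp/2 + 8*sd*(1+Mp)).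
  { intros s Hs.
    set (h := mink (gamma s) w).
    destruct (Rle_dec h 0) as [Hh0|Hh0]; [nra|].
    set (s1 := Rmax 0 (s-4)). set (s2 := Rmin n (s+4)).
    assert (Hs1 : 0 <= s1 <= s).
    { unfold s1. split; [apply Rmax_l|]. apply Rmax_lub; lra. }
    assert (Hs2 : s <= s2 <= n).
    { unfold s2. split; [apply Rmin_glb; lra|apply Rmin_l]. }
    assert (Hs12 : s2 - s1 <= 8).
    { unfold s1, s2. pose proof (Rmax_r 0 (s-4)). pose proof (Rmin_r n (s+4)). lra. }
    assert (Ha := HH3 s1 ltac:(lra)). assert (Hx := HH3 s ltac:(lra)).
    assert (Hb := HH3 s2 ltac:(lra)).
    destruct (Hq s1 s ltac:(lra) ltac:(lra)) as [Hal1 Hal2].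
    destruct (Hq s s2 ltac:(lra) ltac:(lra)) as [Hbe1 Hbe2].
    destruct (Hq s1 s2 ltac:(lra) ltac:(lra)) as [HD1 HD2].
    rewrite Rabs_ord in Hal1, Hal2, Hbe1, Hbe2, HD1, HD2 by lra.
    assert (Hex : dH (gamma s1) (gamma s) + dH (gamma s) (gamma s2) <=
                  dH (gamma s1) (gamma s2) + 30*delta).
    { pose proof (div_ge (s2 - s1) delta ltac:(lra) ltac:(lra)). nra. }
    destruct (excess (gamma s1) (gamma s) (gamma s2) (30*delta) Ha Hx Hb ltac:(lra) Hex)
      as [l [m [Hl [Hm [Hl2 [Hm2 [Hyy HK]]]]]]].
    set (y := lin2 l (gamma s1) m (gamma s2)) in *.
    assert (HyH : inH3 y) by (apply lin2_H3; auto).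
    assert (Hyw : mink y w <= Mp/2).
    { unfold y. rewrite mink_lin2_l.
      assert (A1 : l * mink (gamma s1) w <= Mp/4).
      { destruct (Rle_dec 0 (s-4)) as [Hs4|Hs4].
        - assert (Es1 : s1 = s - 4) by (unfold s1; apply Rmax_right; lra).
          assert (l <= 1/4).
          { apply Rle_trans with (1 := Hl2). apply Rle_trans with (exp (- (37/10))).
            - apply exp_le.
              pose proof (div_ge 4 delta ltac:(lra) ltac:(lra)).
              replace (s - s1) with 4 in Hal1 by (rewrite Es1; ring). lra.
            - apply Rle_trans with (1/(1+37/10)); [apply exp_neg_small; lra|lra]. }
          pose proof (HinE s1 ltac:(lra)). nra.
        - assert (Es1 : s1 = 0) by (unfold s1; apply Rmax_left; lra).
          rewrite Es1. nra. }
      assert (A2 : m * mink (gamma s2) w <= Mp/4).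
      { destruct (Rle_dec (s+4) n) as [Hs4|Hs4].
        - assert (Es2 : s2 = s + 4) by (unfold s2; apply Rmin_right; lra).
          assert (m <= 1/4).
          { apply Rle_trans with (1 := Hm2). apply Rle_trans with (exp (- (37/10))).
            - apply exp_le.
              pose proof (div_ge 4 delta ltac:(lra) ltac:(lra)).
              replace (s2 - s) with 4 in Hbe1 by (rewrite Es2; ring). lra.
            - apply Rle_trans with (1/(1+37/10)); [apply exp_neg_small; lra|lra]. }
          pose proof (HinE s2 ltac:(lra)). nra.
        - assert (Es2 : s2 = n) by (unfold s2; apply Rmin_left; lra).
          rewrite Es2. nra. }
      lra. }
    pose proof (err_lemma (gamma s) y w (proj1 Hx) Hyy Hw) as Er. simpl in Er.
    set (K := - mink (gamma s) y) in *.
    assert (HK1 : 1 <= K) by (apply rev_CS; auto).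
    assert (HK2 : K*K - 1 <= 64*delta).
    { assert (K*K <= exp (30*delta) * exp(30*delta)) by nra.
      rewrite <- exp_plus in H.
      pose proof (exp_small_up (30*delta+30*delta) ltac:(lra) ltac:(lra)).
      assert (1/(1-(30*delta+30*delta)) <= 1 + 64*delta).
      { apply (Rmult_le_reg_r (1-(30*delta+30*delta))); [lra|].
        unfold Rdiv. rewrite Rmult_assoc, Rinv_l by lra. nra. }
      lra. }
    assert (Hh : h <= Mp) by (apply HinE; lra).
    fold h in Er.
    assert (Hb3 : (K*h - mink y w)*(K*h - mink y w) <= (8*sd*(1+Mp))*(8*sd*(1+Mp))).
    { apply Rle_trans with (1 := Er).
      replace ((8*sd*(1+Mp))*(8*sd*(1+Mp))) with (64*(sd*sd)*((1+Mp)*(1+Mp))) by ring.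
      rewrite Hsd. apply Rmult_le_compat; nra. }
    destruct (Rle_dec (h - Mp/2) 0) as [Hc|Hc]; [nra|].
    assert (K*h - mink y w <= 8*sd*(1+Mp)) by (apply sq_le; nra).
    nra. }
  assert (HT : M <= Mp/2 + 8*sd*(1+Mp)).
  { apply HMl. intros m [s [Hs ->]]. apply Hclaim; auto. }
  assert (HMp : Mp <= Mp/2 + 8*sd*(1+Mp)).
  { unfold Mp at 1. apply Rmax_lub; auto. nra. }
  assert (Mp <= 32*sd) by nra.
  intros s Hs. pose proof (HinE s Hs). fold sd. lra.
Qed.

Lemma id_I1 D t : sh D * ch t = sh (D-t) + sh t * ch D.
Proof.
  unfold sh, ch. rewrite !exp_neg, exp_minus.
  pose proof (exp_pos t). pose proof (exp_pos D).
  set (X := exp t) in *. set (Y := exp D) in *. field; lra.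
Qed.

Lemma id_I2 D t : sh (D-t) * ch t + sh t * ch (D-t) = sh D.
Proof.
  unfold sh, ch. rewrite !exp_neg, exp_minus.
  pose proof (exp_pos t). pose proof (exp_pos D).
  set (X := exp t) in *. set (Y := exp D) in *. field; lra.
Qed.

Lemma id_I3 D t : sh D * ch (D - t) = ch D * sh (D-t) + sh t.
Proof.
  unfold sh, ch. rewrite !exp_neg, exp_minus.
  pose proof (exp_pos t). pose proof (exp_pos D).
  set (X := exp t) in *. set (Y := exp D) in *. field; lra.
Qed.

Lemma id_chsh D : ch D * ch D - 1 = sh D * sh D.
Proof.
  unfold sh, ch. rewrite !exp_neg. pose proof (exp_pos D).
  set (Y := exp D) in *. field; lra.
Qed.

Lemma geo_rep p q c t : inH3 p -> inH3 q -> geodesic_segment p q c -> 0 < dH p q ->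
  0 <= t <= dH p q -> forall x,
  sh (dH p q) * mink x (c t) = sh (dH p q - t) * mink x p + sh t * mink x q.
Proof.
  intros Hp Hq [Hc [Hc0 [HcD Hiso]]] HD Ht x.
  set (D := dH p q) in *.
  assert (Hy := Hc t Ht).
  assert (Ep : - mink (c t) p = ch t).
  { rewrite <- (ch_dH (c t) p) by auto. rewrite <- Hc0 at 1.
    rewrite Hiso by lra. rewrite Rminus_0_r, Rabs_right by lra. reflexivity. }
  assert (Eq : - mink (c t) q = ch (D - t)).
  { rewrite <- (ch_dH (c t) q) by auto. rewrite <- HcD at 1.
    rewrite Hiso by lra. rewrite Rabs_ord by lra. reflexivity. }
  assert (Hpp : mink p p = -1) by apply Hp. assert (Hqq : mink q q = -1) by apply Hq.
  assert (Hyy : mink (c t) (c t) = -1) by apply Hy.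
  assert (Epq : - mink p q = ch D) by (unfold D; rewrite ch_dH; auto).
  set (u := lin2 (sh (D-t)) p (sh t) q).
  set (v := lin2 (sh D) (c t) (-1) u).
  assert (Hvp : mink v p = 0).
  { unfold v, u. rewrite !mink_lin2_l. rewrite (mink_sym q p).
    pose proof (id_I1 D t). nra. }
  assert (Hvv : mink v v = 0).
  { unfold v. rewrite mink_lin2_sq. unfold u. rewrite mink_lin2_sq, mink_lin2_r.
    pose proof (geo_identity t D). pose proof (id_I2 D t).
    assert (E1 : mink (c t) p = - ch t) by lra. assert (E2 : mink (c t) q = - ch (D-t)) by lra.
    assert (E3 : mink p q = - ch D) by lra.
    rewrite E1, E2, E3, Hpp, Hqq, Hyy. nra. }
  pose proof (orth_null p v Hpp Hvp Hvv) as Hv0.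
  assert (mink x v = 0) by (rewrite Hv0; destruct x as [[[? ?] ?] ?]; simpl; ring).
  unfold v, u in H. rewrite !mink_lin2_r in H. lra.
Qed.

Lemma arcosh_small K B : 1 <= K -> K*K <= 1 + 2*B*B -> 0 <= B <= 1 -> arcosh K <= 3*B.
Proof.
  intros HK HKB HB. unfold arcosh.
  assert (H1 : K <= 1 + B*B) by nra.
  assert (H2 : sqrt (K*K-1) <= 2*B).
  { rewrite <- (sqrt_square (2*B)) by lra. apply sqrt_le_1_alt. nra. }
  assert (H3 : ln (K + sqrt (K*K-1)) <= ln (1 + 3*B)).
  { apply ln_le. pose proof (sqrt_pos (K*K-1)); lra. nra. }
  assert (ln (1 + 3*B) <= 3*B).
  { apply Rle_trans with (ln (exp (3*B))); [apply ln_le; [lra|apply exp_ineq1_le]|].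
    rewrite ln_exp; lra. }
  lra.
Qed.

Definition scal (k : R) (z : R4) := lin2 k z 0 z.

Lemma scal_norm z r : mink z z = r*r -> 0 < r -> mink (scal (1/r) z) (scal (1/r) z) = 1.
Proof. intros H Hr. unfold scal. rewrite mink_lin2_sq, H. field. lra. Qed.

Lemma scal_r y z k : mink y (scal k z) = k * mink y z.
Proof. unfold scal. rewrite mink_lin2_r. ring. Qed.

Lemma ch0 : ch 0 = 1.
Proof. unfold ch. rewrite Ropp_0, exp_0. field. Qed.

Lemma geo_close p q x c B : inH3 p -> inH3 q -> inH3 x -> geodesic_segment p q c ->
  0 <= B <= 1 ->
  (forall w, mink w w = 1 -> mink p w <= 0 -> mink q w <= 0 -> mink x w <= B) ->
  exists t, 0 <= t <= dH p q /\ dH x (c t) <= 3*B.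
Proof.
  intros Hp Hq Hx Hgeo HB Hmain.
  pose proof Hgeo as [Hc [Hc0 [HcD Hiso]]].
  assert (Hpp : mink p p = -1) by apply Hp. assert (Hqq : mink q q = -1) by apply Hq.
  assert (Hxx : mink x x = -1) by apply Hx.
  pose proof (dH_ge0 p q Hp Hq) as HD0.
  pose proof (ch_dH p q Hp Hq) as CD.
  set (D := dH p q) in *.
  set (A := - mink x p). set (Bq := - mink x q).
  assert (HA : 1 <= A) by (apply rev_CS; auto).
  assert (HBq : 1 <= Bq) by (apply rev_CS; auto).
  destruct (Rle_lt_or_eq_dec 0 D HD0) as [HDpos|HD].
  2:{
    exists 0. split; [lra|]. rewrite Hc0.
    assert (Epq : mink p q = -1). { rewrite <- HD, ch0 in CD. lra. }
    set (v := lin2 1 p (-1) q).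
    assert (Hvp : mink v p = 0).
    { unfold v. rewrite mink_lin2_l, (mink_sym q p), Epq, Hpp. ring. }
    assert (Hvv : mink v v = 0).
    { unfold v. rewrite mink_lin2_sq, Epq, Hpp, Hqq. ring. }
    pose proof (orth_null p v Hpp Hvp Hvv) as Hv0.
    assert (Hpqw : forall w, mink p w = mink q w).
    { intros w. assert (mink v w = 0) by (rewrite Hv0; destruct w as [[[? ?] ?] ?]; simpl; ring).
      unfold v in H. rewrite mink_lin2_l in H. lra. }
    assert (HAB : A*A <= 1 + 2*B*B).
    { destruct (Rle_dec (A*A) 1) as [H|H]; [nra|].
      set (r := sqrt (A*A-1)).
      assert (Hr : r*r = A*A-1) by (apply sqrt_sqrt; lra).
      assert (Hr0 : 0 < r) by (apply sqrt_lt_R0; lra).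
      set (z := lin2 1 x (-A) p).
      assert (Hzz : mink z z = r*r).
      { unfold z. rewrite mink_lin2_sq, Hxx, Hpp, Hr. unfold A. ring. }
      set (w := scal (1/r) z).
      assert (Hw : mink w w = 1) by (apply scal_norm; auto).
      assert (Hpw : mink p w = 0).
      { unfold w. rewrite scal_r. unfold z. rewrite mink_lin2_r, Hpp, (mink_sym p x).
        unfold A. field. lra. }
      assert (Hxw : mink x w = r).
      { unfold w. rewrite scal_r. unfold z. rewrite mink_lin2_r, Hxx.
        fold A. replace (mink x p) with (-A) by (unfold A; ring).
        apply (Rmult_eq_reg_r r); [|lra]. field_simplify; [|lra]. nra. }
      specialize (Hmain w Hw ltac:(lra) ltac:(rewrite <- Hpqw; lra)).
      nra. }
    unfold dH. apply arcosh_small; auto. }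
  set (C := ch D) in *. set (S := sh D).
  assert (HS : 0 < S) by (apply sh_pos; auto).
  assert (HCS : C*C - 1 = S*S) by apply id_chsh.
  assert (Epq : mink p q = - C) by lra.
  assert (Eqp : mink q p = - C) by (rewrite mink_sym; lra).
  assert (Exp : mink p x = - A) by (rewrite mink_sym; unfold A; ring).
  assert (Exq : mink q x = - Bq) by (rewrite mink_sym; unfold Bq; ring).
  set (al := (C*Bq - A)/(S*S)). set (be := (C*A - Bq)/(S*S)).
  assert (HS2 : S*S <> 0) by nra.
  assert (HAab : A = al + be*C).
  { assert (E : (C*Bq - A) + (C*A - Bq)*C = A*(S*S)) by (rewrite <- HCS; ring).
    assert (E2 : al + be*C = ((C*Bq - A) + (C*A - Bq)*C)/(S*S)) by (unfold al, be; field; lra).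
    rewrite E2, E. field. lra. }
  assert (HBab : Bq = al*C + be).
  { assert (E : (C*Bq - A)*C + (C*A - Bq) = Bq*(S*S)) by (rewrite <- HCS; ring).
    assert (E2 : al*C + be = ((C*Bq - A)*C + (C*A - Bq))/(S*S)) by (unfold al, be; field; lra).
    rewrite E2, E. field. lra. }
  set (Pi := al*al + be*be + 2*al*be*C).
  assert (HPi : Pi <= 1 + B*B).
  { destruct (Rle_dec Pi 1) as [H|H]; [nra|].
    set (r := sqrt (Pi-1)).
    assert (Hr : r*r = Pi-1) by (apply sqrt_sqrt; lra).
    assert (Hr0 : 0 < r) by (apply sqrt_lt_R0; lra).
    set (z := lin2 1 x (-1) (lin2 al p be q)).
    assert (Hzz : mink z z = r*r).
    { unfold z. rewrite mink_lin2_sq, mink_lin2_sq, mink_lin2_r, Hxx, Hpp, Hqq, Epq, Hr.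
      fold A Bq. replace (mink x p) with (-A) by (unfold A; ring).
      replace (mink x q) with (-Bq) by (unfold Bq; ring).
      rewrite HAab, HBab. unfold Pi. ring. }
    set (w := scal (1/r) z).
    assert (Hw : mink w w = 1) by (apply scal_norm; auto).
    assert (Hpw : mink p w = 0).
    { unfold w. rewrite scal_r. unfold z. rewrite !mink_lin2_r, Hpp, Epq, Exp.
      rewrite HAab. field. lra. }
    assert (Hqw : mink q w = 0).
    { unfold w. rewrite scal_r. unfold z. rewrite !mink_lin2_r, Hqq, Eqp, Exq.
      rewrite HBab. field. lra. }
    assert (Hxw : mink x w = r).
    { unfold w. rewrite scal_r. unfold z. rewrite !mink_lin2_r, Hxx.
      replace (mink x p) with (-A) by (unfold A; ring).
      replace (mink x q) with (-Bq) by (unfold Bq; ring).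
      apply (Rmult_eq_reg_r r); [|lra]. field_simplify; [|lra].
      rewrite HAab, HBab. unfold Pi in Hr. nra. }
    specialize (Hmain w Hw ltac:(lra) ltac:(lra)). nra. }
  (* overshoot beyond q *)
  assert (Hal : - al * S <= B).
  { set (w := lin2 (C/S) q (-1/S) p).
    assert (Hw : mink w w = 1).
    { unfold w. rewrite mink_lin2_sq, Hpp, Hqq, Eqp.
      replace (C / S * (C / S) * -1 + 2 * (C / S) * (-1 / S) * - C + -1 / S * (-1 / S) * -1)
        with ((C*C-1)/(S*S)) by (field; lra). rewrite HCS. field. lra. }
    assert (Hpw : mink p w <= 0).
    { unfold w. rewrite mink_lin2_r, Hpp, Epq.
      replace (C / S * - C + -1 / S * -1) with (- (C*C-1)/S) by (field; lra).
      rewrite HCS. replace (- (S*S)/S) with (-S) by (field; lra). lra. }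
    assert (Hqw : mink q w <= 0).
    { unfold w. rewrite mink_lin2_r, Hqq, Eqp. right. field. lra. }
    specialize (Hmain w Hw Hpw Hqw).
    unfold w in Hmain. rewrite mink_lin2_r in Hmain.
    replace (mink x p) with (-A) in Hmain by (unfold A; ring).
    replace (mink x q) with (-Bq) in Hmain by (unfold Bq; ring).
    replace (- al * S) with (C / S * - Bq + -1 / S * - A); auto.
    unfold al. field_simplify; [|lra|lra]. nra. }
  assert (Hbe : - be * S <= B).
  { set (w := lin2 (C/S) p (-1/S) q).
    assert (Hw : mink w w = 1).
    { unfold w. rewrite mink_lin2_sq, Hpp, Hqq, Epq.
      replace (C / S * (C / S) * -1 + 2 * (C / S) * (-1 / S) * - C + -1 / S * (-1 / S) * -1)
        with ((C*C-1)/(S*S)) by (field; lra). rewrite HCS. field. lra. }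
    assert (Hqw : mink q w <= 0).
    { unfold w. rewrite mink_lin2_r, Hqq, Eqp.
      replace (C / S * - C + -1 / S * -1) with (- (C*C-1)/S) by (field; lra).
      rewrite HCS. replace (- (S*S)/S) with (-S) by (field; lra). lra. }
    assert (Hpw : mink p w <= 0).
    { unfold w. rewrite mink_lin2_r, Hpp, Epq. right. field. lra. }
    specialize (Hmain w Hw Hpw Hqw).
    unfold w in Hmain. rewrite mink_lin2_r in Hmain.
    replace (mink x p) with (-A) in Hmain by (unfold A; ring).
    replace (mink x q) with (-Bq) in Hmain by (unfold Bq; ring).
    replace (- be * S) with (C / S * - A + -1 / S * - Bq); auto.
    unfold be. field_simplify; [|lra|lra]. nra. }
  assert (HxpK : dH x p = arcosh A) by reflexivity.
  destruct (Rlt_dec be 0) as [Hb0|Hb0].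
  { exists 0. split; [lra|]. rewrite Hc0. unfold dH. fold A. apply arcosh_small; auto.
    assert (A*A = Pi + (be*S)*(be*S)).
    { rewrite HAab; unfold Pi; replace ((be*S)*(be*S)) with (be*be*(S*S)) by ring;
      rewrite <- HCS; ring. }
    assert (0 < -be*S) by nra.
    assert ((be*S)*(be*S) <= B*B) by nra. nra. }
  destruct (Rlt_dec al 0) as [Ha0|Ha0].
  { exists D. split; [lra|]. rewrite HcD. unfold dH. fold Bq. apply arcosh_small; auto.
    assert (Bq*Bq = Pi + (al*S)*(al*S)).
    { rewrite HBab; unfold Pi; replace ((al*S)*(al*S)) with (al*al*(S*S)) by ring;
      rewrite <- HCS; ring. }
    assert (0 < -al*S) by nra.
    assert ((al*S)*(al*S) <= B*B) by nra. nra. }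
  set (Y := exp D).
  assert (HY : 1 < Y) by (unfold Y; rewrite <- exp_0; apply exp_increasing; auto).
  assert (HC : C = (Y + /Y)/2) by (unfold C, ch, Y; rewrite exp_neg; reflexivity).
  set (P := al + be/Y). set (Q := al + be*Y).
  assert (Hnz : 0 < al \/ 0 < be).
  { destruct (Rle_lt_or_eq_dec 0 al ltac:(lra)); auto.
    destruct (Rle_lt_or_eq_dec 0 be ltac:(lra)); auto.
    exfalso. rewrite <- e, <- e0 in HAab. lra. }
  assert (HP : 0 < P).
  { unfold P. assert (0 <= be/Y) by (apply Rdiv_le_0_compat; lra).
    destruct Hnz; [lra|]. assert (0 < be/Y) by (apply Rdiv_lt_0_compat; lra). lra. }
  assert (HPQ : P <= Q).
  { unfold P, Q. assert (be/Y <= be*Y).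
    { apply (Rmult_le_reg_r Y); [lra|]. unfold Rdiv. rewrite Rmult_assoc, Rinv_l by lra.
      assert (1 <= Y*Y) by nra. assert (0 <= be) by lra. rewrite Rmult_1_r. nra. }
    lra. }
  assert (HQY : Q <= Y*Y*P).
  { unfold P, Q. replace (Y*Y*(al + be/Y)) with (Y*Y*al + be*Y) by (field; lra).
    assert (1 <= Y*Y) by nra. assert (0 <= al) by lra. nra. }
  set (t := ln (Q/P) / 2).
  assert (Ht0 : 0 <= t).
  { unfold t. assert (0 <= ln (Q/P)); [|lra]. rewrite <- ln_1. apply ln_le; [lra|].
    apply (Rmult_le_reg_r P); auto. unfold Rdiv. rewrite Rmult_assoc, Rinv_l by lra. lra. }
  assert (HtD : t <= D).
  { unfold t. assert (ln (Q/P) <= 2*D); [|lra].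
    replace (2*D) with (ln (Y*Y)) by (unfold Y; rewrite <- exp_plus, ln_exp; ring).
    apply ln_le. apply Rdiv_lt_0_compat; lra.
    apply (Rmult_le_reg_r P); auto. unfold Rdiv. rewrite Rmult_assoc, Rinv_l by lra. lra. }
  set (T := exp t).
  assert (HT0 : 0 < T) by apply exp_pos.
  assert (HTT : T*T = Q/P).
  { unfold T. rewrite <- exp_plus. replace (t+t) with (ln (Q/P)) by (unfold t; field).
    apply exp_ln. apply Rdiv_lt_0_compat; lra. }
  exists t. split; [lra|].
  pose proof (geo_rep p q c t Hp Hq Hgeo HDpos ltac:(fold D; lra) x) as Hrep. fold D S in Hrep.
  assert (Hct : inH3 (c t)) by (apply Hc; fold D; lra).
  set (K := - mink x (c t)).
  assert (HK1 : 1 <= K) by (apply rev_CS; auto).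
  assert (HK : K = al * ch t + be * ch (D - t)).
  { apply (Rmult_eq_reg_r S); [|lra]. unfold K.
    replace (- mink x (c t) * S) with (- (S * mink x (c t))) by ring. rewrite Hrep.
    replace (mink x p) with (-A) by (unfold A; ring).
    replace (mink x q) with (-Bq) by (unfold Bq; ring).
    rewrite HAab, HBab. pose proof (id_I1 D t). pose proof (id_I3 D t). fold C S in H, H0.
    nra. }
  assert (HK2 : K = T*P).
  { rewrite HK.
    assert (E1 : ch t = (T + /T)/2) by (unfold ch, T; rewrite exp_neg; reflexivity).
    assert (E2 : ch (D - t) = (Y/T + T/Y)/2).
    { unfold ch, T, Y. rewrite exp_neg, !exp_minus. pose proof (exp_pos D). pose proof (exp_pos t).
      field; lra. }
    rewrite E1, E2.
    assert (EQ : Q = T*T*P) by (rewrite HTT; field; lra).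
    assert (EQ' : Y*Q = T*T*(al*Y+be)) by (rewrite EQ; unfold P; field; lra).
    apply (Rmult_eq_reg_r (2*T*Y)); [|nra].
    replace ((al * ((T + / T) / 2) + be * ((Y / T + T / Y) / 2)) * (2*T*Y))
      with (al*Y*(T*T+1) + be*(Y*Y + T*T)) by (field; lra).
    replace (T*P*(2*T*Y)) with (2*T*T*(al*Y + be)) by (unfold P; field; lra).
    unfold Q in EQ'. nra. }
  assert (HKK : K*K = Pi).
  { rewrite HK2. replace (T*P*(T*P)) with ((T*T)*P*P) by ring. rewrite HTT.
    replace (Q/P*P*P) with (Q*P) by (field; lra). unfold Q, P, Pi. rewrite HC. field. lra. }
  unfold dH. fold K. apply arcosh_small; auto. nra.
Qed.

Lemma final_num d : 0 < d < 1/10^7 -> 96 * sqrt d < 5 * Rpower d (1/5).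
Proof.
  intros Hd. set (r := Rpower d (1/5)).
  assert (Hr0 : 0 < r) by (unfold r, Rpower; apply exp_pos).
  assert (Hr5 : r^5 = d).
  { rewrite <- Rpower_pow by auto. unfold r. rewrite Rpower_mult.
    replace (1/5 * INR 5) with 1 by (simpl; field). apply Rpower_1. lra. }
  assert (Hr1 : r <= 1).
  { destruct (Rle_dec r 1) as [H|H]; auto. exfalso.
    assert (1^5 <= r^5) by (apply pow_incr; lra). simpl in H0. lra. }
  assert (Hr2 : r < 5/96).
  { destruct (Rlt_dec r (5/96)) as [H|H]; auto. exfalso.
    assert ((5/96)^5 <= r^5) by (apply pow_incr; lra). simpl in H0. lra. }
  set (sd := sqrt d).
  assert (Hsd : sd*sd = d) by (apply sqrt_sqrt; lra).
  assert (Hsd0 : 0 <= sd) by apply sqrt_pos.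
  assert (sd <= r*r).
  { apply sq_le; [nra|]. rewrite Hsd, <- Hr5. simpl.
    assert (r*(r*(r*(r*r))) <= r*(r*(r*(r*1)))) by (repeat (apply Rmult_le_compat_l; [lra|]); lra).
    nra. }
  nra.
Qed.

Theorem mainTheorem14 :
  exists delta0 : R, 0 < delta0 /\
    forall delta : R, 0 < delta < delta0 ->
    forall (n : nat) (gamma : R -> R4) (c : R -> R4),
      quasigeodesic delta (INR n) gamma ->
      geodesic_segment (gamma 0) (gamma (INR n)) c ->
      forall s, 0 <= s <= INR n ->
        exists t, 0 <= t <= dH (gamma 0) (gamma (INR n)) /\
          dH (gamma s) (c t) < 5 * Rpower delta (1/5).
Proof.
  exists (1/10^7). split; [lra|].
  intros delta Hd n gamma c Hq Hgeo s Hs.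
  pose proof (pos_INR n) as HN.
  set (N := INR n) in *.
  pose proof Hq as [HH3 _].
  set (sd := sqrt delta).
  assert (Hsd : sd*sd = delta) by (apply sqrt_sqrt; lra).
  assert (Hsd0 : 0 <= sd) by apply sqrt_pos.
  assert (Hsd1 : sd <= 1/64) by nra.
  destruct (geo_close (gamma 0) (gamma N) (gamma s) c (32*sd) (HH3 0 ltac:(lra))
     (HH3 N ltac:(lra)) (HH3 s Hs) Hgeo ltac:(lra)) as [t [Ht Hdt]].
  { intros w Hw H0 HN0. apply (main_max delta N gamma w); auto. lra. }
  exists t. split; auto.
  pose proof (final_num delta Hd). fold sd in H. lra.
Qed.
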